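(* Let $\mathbf d=(d_1,\ldots,d_n)$ be positive integers and let $\tilde{\mathcal H}=V\left(\left(\prod_{i=1}^n(x_i+1)\right)-1\right)\subset\mathbb{C}^n$. Then the $\mathbf d$-osculants of $\tilde{\mathcal H}$ are in bijection with the primitive $\mathbf d$-necklaces.
   Context: $|\mathbf d|=\sum d_i$. A $\mathbf d$-parametrization is a polynomial map $\mathbf x(t)=(x_1(t),\ldots,x_n(t))$ with $x_i\in\mathbb{C}[t]$ of degree $d_i$ and $\mathbf x(0)=\mathbf 0$; it is $1$-fold if generically one-to-one onto its image. A $\mathbf d$-osculant of $V(f)$ is a curve which is the image of a $1$-fold $\mathbf d$-parametrization with $f(\mathbf x(t))\equiv0\pmod{t^{|\mathbf d|}}$ (counted as distinct image curves). A $\mathbf d$-necklace is a circular arrangement of $|\mathbf d|$ beads with $d_i$ of color $i$, modulo rotation; it is primitive if its rotation orbit has $|\mathbf d|$ elements. *)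

(* Defs.v *)
From HB Require Import structures.
From mathcomp Require Import all_boot all_order all_algebra.
From mathcomp Require Import complex.
From mathcomp Require Import reals.
Set Implicit Arguments. Unset Strict Implicit. Unset Printing Implicit Defensive.
Import Order.TTheory GRing.Theory Num.Theory.
Local Open Scope ring_scope.

Definition dsum (n : nat) (d : 'I_n -> nat) : nat := (\sum_(i < n) d i)%N.

Section Osc.
Variable C : fieldType.
Variable n : nat.

Definition peval (x : 'I_n -> {poly C}) (t : C) : {ffun 'I_n -> C} :=
  [ffun i => (x i).[t]].

Definition is_dparam (d : 'I_n -> nat) (x : 'I_n -> {poly C}) : Prop :=
  forall i, size (x i) = (d i).+1 /\ (x i).[0] = 0.

Definition one_fold (x : 'I_n -> {poly C}) : Prop :=
  exists S : seq C, forall t s, t \notin S -> peval x t = peval x s -> s = t.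

Definition image_curve (x : 'I_n -> {poly C}) : {ffun 'I_n -> C} -> Prop :=
  fun p => exists t, p = peval x t.

(* f(x(t)) = 0 mod t^|d| for f = prod_i (x_i + 1) - 1 *)
Definition osc_condH (d : 'I_n -> nat) (x : 'I_n -> {poly C}) : bool :=
  'X^(dsum d) %| (\prod_(i < n) (x i + 1) - 1).

Definition is_d_osculantH (d : 'I_n -> nat) (G : {ffun 'I_n -> C} -> Prop) : Prop :=
  exists x : 'I_n -> {poly C},
    [/\ is_dparam d x, one_fold x, osc_condH d x & G = image_curve x].
End Osc.

Section Neck.
Variable n : nat.
Variable d : 'I_n -> nat.
Definition word := (dsum d).-tuple 'I_n.

Definition d_word (w : word) : bool := [forall i : 'I_n, count_mem i w == d i].

Definition necklace_of (w : word) : {set word} :=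
  [set [tuple of rot k w] | k : 'I_(dsum d)].

Definition is_d_necklace (S : {set word}) : Prop :=
  exists w, d_word w /\ S = necklace_of w.

Definition is_primitive_d_necklace (S : {set word}) : Prop :=
  is_d_necklace S /\ #|S| = dsum d.
End Neck.

(* Main.v *)
Require Import Defs.
From HB Require Import structures.
From mathcomp Require Import all_boot all_order all_algebra.
From mathcomp Require Import complex.
From mathcomp Require Import reals.
From mathcomp Require Import cyclic separable cyclotomic zify.
From Stdlib Require Import FunctionalExtensionality PropExtensionality.
Import Order.TTheory GRing.Theory Num.Theory.
Local Open Scope ring_scope.
Set Implicit Arguments. Unset Strict Implicit. Unset Printing Implicit Defensive.

Section Gen.
Variable C : numClosedFieldType.

Lemma prim_root_exists (N : nat) : (0 < N)%N -> exists z : C, N.-primitive_root z.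
Proof.
pose p : {poly C} := 'X^N - 1; have [r Dp] := closed_field_poly_normal p.
move=> n_gt0; rewrite (monicP _) ?monicXnsubC // scale1r in Dp.
have rn1: all N.-unity_root r by apply/allP=> z; rewrite -root_prod_XsubC -Dp.
have sz_r: (N < (size r).+1)%N.
  by rewrite -(size_prod_XsubC r id) -Dp size_XnsubC.
have [|z] := hasP (has_prim_root n_gt0 rn1 _ sz_r); last by exists z.
by rewrite -separable_prod_XsubC -Dp separable_Xn_sub_1 // pnatr_eq0 -lt0n.
Qed.

Lemma roots_seq (p : {poly C}) : p != 0 -> exists S : seq C, forall t, t \notin S -> p.[t] != 0.
Proof.
move=> p0; have [r Dp] := closed_field_poly_normal p.
exists r => t tr; rewrite Dp hornerZ mulf_neq0 ?lead_coef_eq0 // horner_prod.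
rewrite prodf_seq_neq0; apply/allP => z zr /=.
rewrite hornerXsubC subr_eq0; apply: contraNN tr => /eqP ->; done.
Qed.

Lemma fresh (S : seq C) : exists t, t \notin S.
Proof.
pose s := [seq (k%:R : C) | k <- iota 0 (size S).+1].
have us : uniq s.
  rewrite map_inj_uniq ?iota_uniq // => a b /eqP; rewrite eqr_nat => /eqP //.
case: (boolP (all (fun x => x \in S) s)) => [/allP H|].
  have := uniq_leq_size us H; by rewrite size_map size_iota ltnn.
by case/allPn => x _ xS; exists x.
Qed.

End Gen.
Lemma nth_rot_mod (T : Type) (x0 : T) (s : seq T) m k :
  (m < size s)%N -> (k < size s)%N -> nth x0 (rot m s) k = nth x0 s ((k + m) %% size s).
Proof.
move=> mm km; rewrite /rot nth_cat size_drop.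
case: ifP => h.
  rewrite nth_drop modn_small; first by rewrite addnC.
  lia.
rewrite nth_take; last by lia.
have e : (k + m = (k + m - size s) + size s)%N by lia.
rewrite e modnDr modn_small; last by lia.
congr nth; lia.
Qed.

Section UY.
Variables (C : numClosedFieldType) (N n : nat).
Definition U (r : 'I_N -> C) (g : 'I_N -> 'I_n) (i : 'I_n) : {poly C} :=
  \prod_(k < N | g k == i) ('X - (r k)%:P).
Definition Y r g i : {poly C} := ((U r g i).[0])^-1 *: U r g i - 1.

Lemma hornerU r g i t : (U r g i).[t] = \prod_(k < N | g k == i) (t - r k).
Proof. rewrite /U horner_prod; apply: eq_bigr => k _; by rewrite hornerXsubC. Qed.

Lemma hornerY r g i t : (Y r g i).[t] = (U r g i).[t] / (U r g i).[0] - 1.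
Proof. by rewrite /Y !hornerE mulrC. Qed.

Lemma hornerY_scale r g i (c s : C) : c != 0 ->
  (Y r g i).[c * s] = (Y (fun k => r k / c) g i).[s].
Proof.
move=> c0; rewrite !hornerY !hornerU.
have E t : \prod_(k < N | g k == i) (c * t - r k) =
   \prod_(k < N | g k == i) c * \prod_(k < N | g k == i) (t - r k / c).
  rewrite -big_split /=; apply: eq_bigr => k _.
  by rewrite mulrBr mulrCA divff // mulr1.
have := E 0; rewrite mulr0 => ->; rewrite E.
set K := \prod_(k < N | g k == i) c.
have K0 : K != 0 by apply/prodf_neq0.
by rewrite invfM mulrACA divff // mul1r.
Qed.

Lemma U_reindex r g (h : 'I_N -> 'I_N) i : injective h ->
  U (fun k => r (h k)) (fun k => g (h k)) i = U r g i.
Proof. by move=> hi; rewrite /U [RHS](reindex_inj hi). Qed.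

Lemma Y_reindex r g (h : 'I_N -> 'I_N) i : injective h ->
  Y (fun k => r (h k)) (fun k => g (h k)) i = Y r g i.
Proof. by move=> hi; rewrite /Y U_reindex. Qed.

Lemma prodU_poly (z : C) g : N.-primitive_root z ->
  \prod_(i < n) U (fun k => z ^+ k) g i = 'X^N - 1.
Proof.
move=> pz; rewrite [LHS](_ : _ = \prod_(k < N) ('X - (z ^+ k)%:P)).
  by rewrite -(factor_Xn_sub_1 pz) big_mkord.
by rewrite [RHS](partition_big g predT).
Qed.

Lemma prodU (z : C) g t : N.-primitive_root z ->
  \prod_(i < n) (U (fun k => z ^+ k) g i).[t] = t ^+ N - 1.
Proof.
move=> pz; rewrite -horner_prod.
have -> : \prod_(i < n) U (fun k => z ^+ k) g i = \prod_(k < N) ('X - (z ^+ k)%:P).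
  by rewrite [RHS](partition_big g predT).
rewrite (_ : \prod_(k < N) _ = 'X^N - 1) ?hornerE //.
by rewrite -(factor_Xn_sub_1 pz) big_mkord.
Qed.

Lemma prodY (z : C) g t : (0 < N)%N -> N.-primitive_root z ->
  \prod_(i < n) ((Y (fun k => z ^+ k) g i).[t] + 1) = 1 - t ^+ N.
Proof.
move=> N0 pz.
under eq_bigr => i _ do rewrite hornerY subrK.
rewrite prodf_div !prodU // expr0n eqn0Ngt N0 /= sub0r invrN1 mulrN1 opprB.
done.
Qed.

End UY.
Lemma eq_Yg (C : numClosedFieldType) N n (r : 'I_N -> C) (g1 g2 : 'I_N -> 'I_n) i :
  g1 =1 g2 -> Y r g1 i = Y r g2 i.
Proof.
by move=> e; rewrite /Y /U (eq_bigl (fun k => g2 k == i)) // => k; rewrite e.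
Qed.
Lemma count_tuple (T : eqType) (N : nat) (w : N.-tuple T) c :
  count_mem c w = #|[pred k | tnth w k == c]|.
Proof.
rewrite -{1}(map_tnth_enum w) count_map -sum1_count -sum1_card.
by rewrite enumT big_enum_val /=.
Qed.

Section Fac.
Variables (C : numClosedFieldType) (N n : nat).

Lemma size_U (r : 'I_N -> C) (g : 'I_N -> 'I_n) i : size (U r g i) = #|[pred k | g k == i]|.+1.
Proof.
rewrite /U (eq_bigl (fun k => k \in [pred k | g k == i])) //.
by rewrite -big_enum size_prod_XsubC cardE.
Qed.

Lemma factor (p : 'I_n -> {poly C}) (d : 'I_n -> nat) (r : 'I_N -> C) :
  injective r -> N = (\sum_i d i)%N -> (forall i, size (p i) = (d i).+1) ->
  (forall k, exists i, root (p i) (r k)) ->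
  exists g : 'I_N -> 'I_n, forall i, p i %= U r g i /\ #|[pred k | g k == i]| = d i.
Proof.
move=> ri Nd sp H.
pose g k := xchoose (H k).
have gP k : root (p (g k)) (r k) := xchooseP (H k).
exists g.
have dv i : U r g i %| p i.
  rewrite /U (eq_bigl (fun k => k \in [pred k | g k == i])) // -big_enum.
  rewrite -(big_map r predT (fun x => 'X - x%:P)).
  apply: uniq_roots_dvdp; last by rewrite uniq_rootsE map_inj_uniq ?enum_uniq.
  apply/allP => x /mapP [k]; rewrite mem_enum inE => /eqP <- ->; exact: gP.
have le i : (#|[pred k | g k == i]| <= d i)%N.
  have p0 : p i != 0 by rewrite -size_poly_eq0 sp.
  by have := dvdp_leq p0 (dv i); rewrite size_U sp ltnS.
have sumc : (\sum_i #|[pred k | g k == i]| = \sum_i d i)%N.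
  rewrite -Nd; transitivity (\sum_(k < N) 1)%N; last by rewrite sum1_card card_ord.
  rewrite [RHS](partition_big g predT) //=.
  by apply: eq_bigr => i _; rewrite sum1_card.
have [_] := @leqif_sum _ predT _ _ _ (fun i (_ : true) => leqif_eq (le i)).
rewrite sumc eqxx => /esym /forall_inP eqs i.
have ei : #|[pred k | g k == i]| = d i by apply/eqP/eqs.
split=> //; rewrite eqp_sym -dvdp_size_eqp ?dv // size_U sp ei //.
Qed.
End Fac.
Lemma eq_Y (C : numClosedFieldType) N n (r1 r2 : 'I_N -> C) (g : 'I_N -> 'I_n) i :
  r1 =1 r2 -> Y r1 g i = Y r2 g i.
Proof.
move=> e; rewrite /Y /U.
by rewrite (eq_bigr (fun k => 'X - (r2 k)%:P)) // => k _; rewrite e.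
Qed.

Section Words.
Variables (C : numClosedFieldType) (n : nat) (d : 'I_n -> nat) (z : C).
Local Notation N := (dsum d).
Hypothesis pz : N.-primitive_root z.
Hypothesis N0 : (0 < N)%N.

Definition rz : 'I_N -> C := fun k => z ^+ k.
Definition Yw (w : word d) : 'I_n -> {poly C} := Y rz (tnth w).

Lemma z_neq0 : z != 0.
Proof.
apply/eqP => z0; move: (prim_expr_order pz); rewrite z0 expr0n eqn0Ngt N0 /=.
by move/eqP; rewrite eq_sym oner_eq0.
Qed.

Lemma rz_inj : injective rz.
Proof.
move=> a b /eqP; rewrite /rz (eq_prim_root_expr pz) !modn_small // => /eqP e.
exact: val_inj.
Qed.

Lemma U0 (g : 'I_N -> 'I_n) i : (U rz g i).[0] != 0.
Proof.
rewrite hornerU; apply/prodf_neq0 => k _.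
by rewrite sub0r oppr_eq0 /rz expf_neq0 // z_neq0.
Qed.

Lemma Usep (g : 'I_N -> 'I_n) i k : g k != i -> (U rz g i).[rz k] != 0.
Proof.
move=> gk; rewrite hornerU; apply/prodf_neq0 => j /eqP gj.
rewrite subr_eq0; apply: contraNneq gk => /rz_inj ->; by rewrite gj.
Qed.

Lemma Uroot (g : 'I_N -> 'I_n) k : (U rz g (g k)).[rz k] = 0.
Proof.
rewrite hornerU; apply/eqP/prodf_eq0; exists k => //; by rewrite subrr.
Qed.

Lemma Ysep (u v : word d) : u != v -> exists i, Yw u i != Yw v i.
Proof.
move=> uv; have [k ne] : exists k, tnth u k != tnth v k.
  apply/existsP; apply: contraNT uv => /existsPn H.
  by apply/eqP/eq_from_tnth => k; apply/eqP; move: (H k); rewrite negbK.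
exists (tnth u k); apply/negP => /eqP e.
have := congr1 (fun p => p.[rz k]) e; rewrite /Yw !hornerY Uroot mul0r => /eqP.
rewrite eq_sym subr_eq subrK mulf_eq0 invr_eq0 (negbTE (U0 _ _)) orbF.
by rewrite (negbTE (Usep _)) // eq_sym.
Qed.

Definition sh (m k : 'I_N) : 'I_N := Ordinal (ltn_pmod (k + m) N0).

Lemma sh_inj m : injective (sh m).
Proof.
move=> a b /(congr1 val) /= /eqP; rewrite eqn_modDr !modn_small // => /eqP e.
exact: val_inj.
Qed.
Lemma tnth_rot (w : word d) (m k : 'I_N) : tnth [tuple of rot m w] k = tnth w (sh m k).
Proof.
rewrite (tnth_nth (tnth w k)) [RHS](tnth_nth (tnth w k)).
change (nth (tnth w k) (rot m w) k = nth (tnth w k) w ((k + m) %% N)).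
by rewrite nth_rot_mod size_tuple.
Qed.

Lemma Yw_rot (w : word d) (m : 'I_N) i s :
  (Yw [tuple of rot m w] i).[s] = (Yw w i).[z ^+ m * s].
Proof.
have zm : z ^+ m != 0 by rewrite expf_neq0 // z_neq0.
rewrite /Yw hornerY_scale //.
rewrite (eq_Yg _ _ (tnth_rot w m)).
rewrite (eq_Y _ _ (r2 := fun k => (fun k' => rz k' / z ^+ m) (sh m k))); last first.
  by move=> k; rewrite /rz /= (prim_expr_mod pz) exprD mulfK.
by rewrite (Y_reindex (fun k' => rz k' / z ^+ m) (tnth w) i (@sh_inj m)).
Qed.

Lemma image_rot (w : word d) (m : 'I_N) :
  image_curve (Yw [tuple of rot m w]) = image_curve (Yw w).
Proof.
have zm : z ^+ m != 0 by rewrite expf_neq0 // z_neq0.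
apply: functional_extensionality => p; apply: propositional_extensionality; split.
  by case=> t ->; exists (z ^+ m * t); apply/ffunP => i; rewrite !ffunE Yw_rot.
by case=> t ->; exists (t / z ^+ m); apply/ffunP => i; rewrite !ffunE Yw_rot mulrC divfK.
Qed.

Lemma key (u v : word d) : exists S : seq C, forall t s, t \notin S ->
  peval (Yw u) t = peval (Yw v) s ->
  exists m : 'I_N, s = z ^+ m * t /\ u = [tuple of rot m v].
Proof.
pose D (m : 'I_N) := \prod_(i < n | Yw u i != Yw [tuple of rot m v] i)
   (Yw u i - Yw [tuple of rot m v] i).
pose P := 'X * \prod_(m < N) D m.
have P0 : P != 0.
  rewrite mulf_neq0 ?polyX_eq0 //; apply/prodf_neq0 => m _.
  by apply/prodf_neq0 => i; rewrite subr_eq0.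
have [S HS] := roots_seq P0.
exists S => t s tS E.
have := HS t tS; rewrite /P hornerM hornerX mulf_eq0 negb_or => /andP [t0].
rewrite horner_prod => /prodf_neq0 HD.
have Ei i : (Yw u i).[t] = (Yw v i).[s].
  by have := congr1 (fun f : {ffun 'I_n -> C} => f i) E; rewrite !ffunE.
have pu := prodY (tnth u) t N0 pz; have pv := prodY (tnth v) s N0 pz.
have ts : t ^+ N = s ^+ N.
  have : 1 - t ^+ N = 1 - s ^+ N.
    rewrite -pu -pv; apply: eq_bigr => i _.
    exact: (congr1 (fun x => x + 1) (Ei i)).
  by move=> h; apply: oppr_inj; apply: (addrI 1).
have tN : t ^+ N != 0 by rewrite expf_neq0.
have e1 : (s / t) ^+ N = 1 by rewrite expr_div_n -ts divff.
have [m sm] := prim_rootP pz e1.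
have sm' : s = z ^+ m * t by rewrite -sm divfK.
exists m; split => //.
apply/eqP; apply: contraT => neq; have [i ne] := Ysep neq.
have := HD m isT; rewrite horner_prod => /prodf_neq0 /(_ i ne).
rewrite hornerD hornerN subr_eq0 => /negP H; exfalso; apply: H; apply/eqP.
by rewrite Yw_rot -sm' Ei.
Qed.

Lemma rot_rot_mod (v : word d) (m j : 'I_N) :
  [tuple of rot j [tuple of rot m v]] = [tuple of rot (sh m j) v].
Proof.
apply: eq_from_tnth => k; rewrite !tnth_rot; congr tnth; apply: val_inj => /=.
by rewrite modnDml modnDmr addnA.
Qed.

Lemma nk_refl (w : word d) : w \in necklace_of w.
Proof. by apply/imsetP; exists (Ordinal N0) => //; apply: val_inj; rewrite /= rot0. Qed.

Lemma nk_mem (u w : word d) : u \in necklace_of w -> exists m : 'I_N, u = [tuple of rot m w].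
Proof. by case/imsetP => m _ ->; exists m. Qed.

Lemma nk_sub (u v : word d) : u \in necklace_of v -> necklace_of u \subset necklace_of v.
Proof.
case/nk_mem => m ->; apply/subsetP => x /nk_mem [j ->]; rewrite rot_rot_mod.
by apply/imsetP; exists (sh m j).
Qed.

Lemma nk_rot (w : word d) (m : 'I_N) : necklace_of [tuple of rot m w] = necklace_of w.
Proof.
apply/eqP; rewrite eqEsubset nk_sub /=; last by apply/imsetP; exists m.
apply: nk_sub; apply/imsetP; exists (Ordinal (ltn_pmod (N - m) N0)) => //.
rewrite rot_rot_mod; apply: val_inj => /=.
rewrite modnDml subnK ?modnn ?rot0 //; exact: ltnW.
Qed.

Definition prim (w : word d) := forall m, (0 < m < N)%N -> rot m w <> w.

Lemma prim_card (w : word d) : prim w -> #|necklace_of w| = N.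
Proof.
move=> pw; rewrite /necklace_of card_in_imset ?card_ord //.
have aux (j k : 'I_N) : (j < k)%N -> rot j w = rot k w -> False.
  move=> jk e; have kN := ltn_ord k.
  apply: (pw (k - j)%N); first by apply/andP; split; lia.
  apply: (@rot_inj j); rewrite rot_rot -rotD; last by rewrite size_tuple; lia.
  by rewrite subnK ?e //; apply: ltnW.
move=> j k _ _ /(congr1 val) /= e.
case: (ltngtP j k) => h; first by case: (aux _ _ h e).
  by case: (aux _ _ h (esym e)).
exact: val_inj.
Qed.

Lemma card_prim (w : word d) : #|necklace_of w| = N -> prim w.
Proof.
move=> c m /andP [m0 mN] e.
have /imset_injP inj : #|necklace_of w| == #|'I_N| by rewrite c card_ord.
have := inj (Ordinal mN) (Ordinal N0) isT isT.
have -> : ([tuple of rot (Ordinal mN) w] : word d) = [tuple of rot (Ordinal N0) w].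
  by apply: val_inj; rewrite /= e rot0.
by move=> /(_ erefl) /(congr1 val) /= m0'; rewrite m0' in m0.
Qed.

Lemma Yw_dparam (u : word d) : d_word u -> (forall i, (0 < d i)%N) -> is_dparam d (Yw u).
Proof.
move=> dw hd i.
have ci : #|[pred k | tnth u k == i]| = d i.
  by rewrite -count_tuple; apply/eqP; move/forallP: dw => /(_ i).
have c0 : ((U rz (tnth u) i).[0])^-1 != 0 by rewrite invr_eq0 U0.
split.
  rewrite /Yw /Y size_polyDl; last first.
    by rewrite size_opp size_poly1 size_scale // size_U ci ltnS hd.
  by rewrite size_scale // size_U ci.
by rewrite /Yw hornerY divff ?U0 // subrr.
Qed.

Lemma Yw_osc (u : word d) : osc_condH d (Yw u).
Proof.
rewrite /osc_condH.
have e : \prod_(i < n) (Yw u i + 1) = - ('X^N - 1).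
  under eq_bigr => i _ do rewrite /Yw /Y subrK.
  rewrite scaler_prod prodfV -horner_prod (prodU_poly _ pz) !hornerE.
  by rewrite expr0n eqn0Ngt N0 /= sub0r invrN1 scaleN1r.
by rewrite e opprB addrAC subrr add0r dvdpNr dvdpp.
Qed.

Lemma Yw_onefold (u : word d) : prim u -> one_fold (Yw u).
Proof.
move=> pu; have [S HS] := key u u.
exists S => t s tS e; have [m [sm um]] := HS t s tS e.
case m0 : (val m == 0)%N.
  by rewrite sm (eqP m0) expr0 mul1r.
exfalso; apply: (pu m); first by rewrite lt0n m0 ltn_ord.
by rewrite {2}um.
Qed.

Lemma surj (x : 'I_n -> {poly C}) : (forall i, (0 < d i)%N) ->
  is_dparam d x -> one_fold x -> osc_condH d x ->
  exists w : word d, [/\ d_word w, prim w & image_curve x = image_curve (Yw w)].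
Proof.
move=> hd dx [S1 HS1] osc.
pose p i := x i + 1.
have sp i : size (p i) = (d i).+1.
  by have [si _] := dx i; rewrite /p size_polyDl si // size_poly1 ltnS hd.
have p0 i : p i != 0 by rewrite -size_poly_eq0 sp.
have p_at0 i : (p i).[0] = 1 by have [_ xi0] := dx i; rewrite /p hornerD xi0 hornerC add0r.
pose P := \prod_(i < n) p i.
have sP : size P = N.+1.
  rewrite size_prod; last by move=> i _; exact: p0.
  rewrite (eq_bigr (fun i => d i + 1)%N); last by move=> i _; rewrite sp addn1.
  by rewrite big_split /= sum1_card /dsum -addSn addnK.
have sPm : size (P - 1) = N.+1 by rewrite size_polyDl sP // size_opp size_poly1 ltnS.
case/dvdpP: osc => q Eq.
have q0 : q != 0 by apply/eqP => q0; move: sPm; rewrite /P Eq q0 mul0r size_poly0.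
have : size q == 1%N by move: sPm; rewrite /P Eq size_mulXn // -addn1 => /addnI ->.
case/size_poly1P => c c0 qc.
have Pt t : P.[t] = 1 + c * t ^+ N.
  have : (P - 1).[t] = c * t ^+ N by rewrite /P Eq qc hornerM hornerC hornerXn.
  by rewrite hornerD hornerN hornerC => h; rewrite -h addrC subrK.
pose b := N.-root (- c^-1).
have bN : b ^+ N = - c^-1 by rewrite rootCK.
have b0 : b != 0.
  apply/eqP => b0'; move: bN; rewrite b0' expr0n eqn0Ngt N0 /= => /eqP.
  by rewrite eq_sym oppr_eq0 invr_eq0 (negbTE c0).
pose r (k : 'I_N) := b * z ^+ k.
have rinj : injective r by move=> j k /(mulfI b0) /rz_inj.
have roots k : exists i, root (p i) (r k).
  have : P.[r k] = 0.
    rewrite Pt /r exprMn bN -exprM mulnC exprM (prim_expr_order pz) expr1n mulr1.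
    by rewrite mulrN mulfV // addrN.
  rewrite /P horner_prod => /eqP /prodf_eq0 [i _ /eqP h]; exists i; exact/rootP.
have [g Hg] := factor rinj (erefl _) sp roots.
have xY i t : (x i).[t] = (Y r g i).[t].
  have /eqpP [[a e] /andP [/= a0 e0] He] := proj1 (Hg i).
  have h t' : a * (p i).[t'] = e * (U r g i).[t'] by rewrite -!hornerZ He.
  have Ut t' : (U r g i).[t'] = e^-1 * (a * (p i).[t']) by rewrite h mulKf.
  rewrite hornerY !Ut p_at0 mulr1 mulrA mulrAC divff ?mul1r; last first.
    by rewrite mulf_neq0 ?invr_eq0.
  by rewrite /p hornerD hornerC addrK.
pose w : word d := [tuple g k | k < N].
have tw : tnth w =1 g by move=> k; rewrite tnth_mktuple.
have xw t : peval x (b * t) = peval (Yw w) t.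
  apply/ffunP => i; rewrite !ffunE xY hornerY_scale // /Yw (eq_Yg _ _ tw).
  by congr horner; apply: eq_Y => k; rewrite /r mulrC mulKf.
have dw : d_word w.
  apply/forallP => i; rewrite count_tuple.
  rewrite (eq_card (B := [pred k | g k == i])) ?(proj2 (Hg i)) // => k.
  by rewrite !inE tw.
have Ximg : image_curve x = image_curve (Yw w).
  apply: functional_extensionality => q'; apply: propositional_extensionality; split.
    by case=> t ->; exists (t / b); rewrite -xw mulrC divfK.
  by case=> t ->; exists (b * t); rewrite xw.
have pw : prim w.
  move=> m /andP [m0 mN] e.
  have [t tS] := fresh (0 :: S1).
  move: tS; rewrite in_cons negb_or => /andP [t0 tS1].
  have E : peval x t = peval x (z ^+ m * t).
    have -> : t = b * (t / b) by rewrite mulrC divfK.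
    rewrite [z ^+ m * _]mulrCA !xw; apply/ffunP => i; rewrite !ffunE.
    rewrite -(Yw_rot w (Ordinal mN)); congr horner; congr Yw; apply: val_inj.
    by rewrite /= e.
  have := HS1 t (z ^+ m * t) tS1 E.
  rewrite -{2}(mul1r t) => /(mulIf t0) /eqP.
  rewrite -(expr0 z) (eq_prim_root_expr pz) mod0n modn_small // => /eqP m00.
  by rewrite m00 in m0.
by exists w.
Qed.
End Words.

Theorem theorem3p6 (R : realType) (n : nat) (d : 'I_n -> nat)
  (hn : (0 < n)%N) (hd : forall i, (0 < d i)%N) :
  exists phi : {set word d} -> ({ffun 'I_n -> R[i]} -> Prop),
    (forall S1 S2, is_primitive_d_necklace S1 -> is_primitive_d_necklace S2 ->
        phi S1 = phi S2 -> S1 = S2) /\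
    (forall S, is_primitive_d_necklace S -> is_d_osculantH d (phi S)) /\
    (forall G, is_d_osculantH d G ->
        exists2 S, is_primitive_d_necklace S & G = phi S).
Proof.
have N0 : (0 < dsum d)%N.
  by rewrite /dsum (bigD1 (Ordinal hn)) //= ltn_addr ?hd.
have [z pz] : exists z : R[i], (dsum d).-primitive_root z by apply: prim_root_exists.
pose phi (S : {set word d}) : {ffun 'I_n -> R[i]} -> Prop :=
  if [pick u in S] is Some u then image_curve (@Yw _ n d z u) else (fun _ => False).
have phi_nk w : phi (necklace_of w) = image_curve (@Yw _ n d z w).
  rewrite /phi; case: pickP => [u uS | none]; last by have := none w; rewrite nk_refl.
  by have [m ->] := nk_mem uS; apply: (image_rot pz N0).
exists phi; split; [|split].
- move=> S1 S2 [[w1 [dw1 ->]] c1] [[w2 [dw2 ->]] c2]; rewrite !phi_nk => E.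
  have [S HS] := key pz N0 w1 w2.
  have [t tS] := fresh S.
  have : image_curve (@Yw _ n d z w2) (peval (@Yw _ n d z w1) t) by rewrite -E; exists t.
  case=> s es; have [m [_ ->]] := HS t s tS es.
  by rewrite (nk_rot N0).
- move=> S [[w [dw ->]] c]; rewrite phi_nk; exists (@Yw _ n d z w); split=> //.
  + exact: (Yw_dparam pz N0).
  + exact: (Yw_onefold pz N0 (card_prim N0 c)).
  + exact: (Yw_osc pz N0).
- move=> G [x [dx ox oscx ->]].
  have [w [dw pw ->]] := surj pz N0 hd dx ox oscx.
  exists (necklace_of w); last by rewrite phi_nk.
  by split; [exists w | apply: (prim_card pz N0)].
Qed.
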